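(* Let $S \subseteq \mathbb{R}^n$ be nonempty, closed and convex, let $F = (F_1,\dots,F_m)^\top \colon S\to\mathbb{R}^m$ be continuous with each $F_i$ $\sigma_i$-convex for some $\sigma_i > 0$, and define $u_0(x) := \sup_{y \in S}\min_{i=1,\dots,m}\{F_i(x) - F_i(y)\}$, $x\in S$. Let $\sigma := \min_i \sigma_i$. Then \[ u_0(x) \ge \frac{\sigma}{2}\inf_{x^\ast\in X^\ast}\|x - x^\ast\|^2 \quad\text{for all } x \in S, \] where $X^\ast$ is the set of Pareto optimal solutions of $\min_{x\in S}F(x)$.
   Context: A function $h\colon S\to\mathbb{R}$ is $\sigma$-convex if $h(\alpha x + (1-\alpha)y) \le \alpha h(x) + (1-\alpha)h(y) - \frac{\alpha(1-\alpha)\sigma}{2}\|x-y\|^2$ for all $x,y\in S$, $\alpha\in[0,1]$. A point $x^\ast\in S$ is Pareto optimal if there is no $x\in S$ with $F_i(x)\le F_i(x^\ast)$ for all $i$ and $F(x)\ne F(x^\ast)$. *)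

(* Defs.v *)
From HB Require Import structures.
From mathcomp Require Import all_boot all_order all_algebra.
From mathcomp Require Import all_classical all_reals all_analysis.
Set Implicit Arguments. Unset Strict Implicit. Unset Printing Implicit Defensive.
Import Order.TTheory GRing.Theory Num.Theory.
Import numFieldNormedType.Exports.
Local Open Scope classical_set_scope.
Local Open Scope ring_scope.

Definition sqnorm (R : realType) (n : nat) (v : 'rV[R]_n) : R :=
  \sum_(j < n) (v ord0 j) ^+ 2.

Definition sigma_convex (R : realType) (n : nat) (S : set 'rV[R]_n)
  (h : 'rV[R]_n -> R) (sigma : R) : Prop :=
  forall x y a, S x -> S y -> 0 <= a -> a <= 1 ->
    h (a *: x + (1 - a) *: y) <=
      a * h x + (1 - a) * h y - a * (1 - a) * sigma / 2 * sqnorm (x - y).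

Definition pareto_optimal (R : realType) (n m : nat) (S : set 'rV[R]_n)
  (F : 'I_m -> 'rV[R]_n -> R) (xs : 'rV[R]_n) : Prop :=
  S xs /\ ~ (exists x, S x /\ (forall i, F i x <= F i xs) /\
                       (exists i, F i x != F i xs)).

Definition u0 (R : realType) (n m : nat) (S : set 'rV[R]_n)
  (F : 'I_m -> 'rV[R]_n -> R) (x : 'rV[R]_n) : \bar R :=
  ereal_sup [set (\big[mine/+oo%E]_(i < m) ((F i x - F i y)%:E))%E | y in S].

Definition min_sigma (R : realType) (m : nat) (sigma : 'I_m -> R) : R :=
  fine (\big[mine/+oo%E]_(i < m) (sigma i)%:E)%E.

(* Main.v *)
Require Import Defs.
From HB Require Import structures.
From mathcomp Require Import all_boot all_order all_algebra.
From mathcomp Require Import all_classical all_reals all_analysis.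
From mathcomp Require Import ring lra.
Import Order.TTheory GRing.Theory Num.Theory.
Import numFieldNormedType.Exports.
Local Open Scope classical_set_scope.
Local Open Scope ring_scope.

Lemma sqnorm_ge0 (R : realType) n (v : 'rV[R]_n) : 0 <= sqnorm v.
Proof. by rewrite /sqnorm sumr_ge0 // => j _; exact: sqr_ge0. Qed.

Lemma sqnorm_entry (R : realType) n (v : 'rV[R]_n) j : (v ord0 j) ^+ 2 <= sqnorm v.
Proof.
rewrite /sqnorm (bigD1 j) //= lerDl sumr_ge0 // => i _; exact: sqr_ge0.
Qed.

Lemma sqnorm_eq0 (R : realType) n (v : 'rV[R]_n) : sqnorm v = 0 -> v = 0.
Proof.
move=> /eqP; rewrite /sqnorm psumr_eq0; last by move=> i _; exact: sqr_ge0.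
move=> /allP H; apply/matrixP => i j; rewrite (ord1 i) mxE.
have := H j (mem_index_enum j); rewrite /= sqrf_eq0 => /eqP //.
Qed.

Lemma cont_bigmax (T : topologicalType) (R : realType) (I : Type) (s : seq I)
  (g : I -> T -> R) (h : T -> R) : continuous h -> (forall i, continuous (g i)) ->
  continuous (fun y => \big[Num.max/h y]_(i <- s) g i y).
Proof.
move=> ch cg; elim: s => [|a s IH].
  by under eq_fun do rewrite big_nil.
under eq_fun do rewrite big_cons.
move=> y; exact: (@continuous_max R T (g a) (fun y => \big[Num.max/h y]_(i <- s) g i y) y (cg a y) (IH y)).
Qed.

Lemma convS (R : realType) n (S : set 'rV[R]_n) : convex_set S ->
  forall y w a, S y -> S w -> 0 <= a -> a <= 1 -> S (a *: y + (1 - a) *: w).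
Proof.
move=> cS y w a Sy Sw a0 a1.
have := cS y w (Itv01 a0 a1) (mem_set Sy) (mem_set Sw).
by rewrite inE.
Qed.

Theorem corollary6p3 (R : realType) (n m : nat) (S : set 'rV[R]_n)
  (F : 'I_m -> 'rV[R]_n -> R) (sigma : 'I_m -> R) :
  (0 < m)%N ->
  S !=set0 -> closed S -> convex_set S ->
  (forall i, {within S, continuous (F i)}) ->
  (forall i, 0 < sigma i) ->
  (forall i, sigma_convex S (F i) (sigma i)) ->
  forall x, S x ->
    ((min_sigma sigma / 2)%:E *
       ereal_inf [set (sqnorm (x - xs))%:E | xs in pareto_optimal S F] <=
     u0 S F x)%E.
Proof.
case: m F sigma => // k F sigma _ _ clS cvS cF sig0 sigc x Sx.
set s := min_sigma sigma.
have [s0 ssig] : 0 < s /\ forall i, s <= sigma i.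
  have [r [er r0]] : exists r, (\big[mine/+oo%E]_(i < k.+1) (sigma i)%:E)%E = r%:E /\ 0 < r.
    rewrite big_ord_recl.
    pose K := (fun e : \bar R => e = +oo%E \/ exists r, e = r%:E /\ 0 < r).
    have : K (\big[mine/+oo%E]_(i < k) (sigma (lift ord0 i))%:E)%E.
      apply: (big_ind K); [by left| |by move=> i _; right; exists (sigma (lift ord0 i))].
      move=> e1 e2 [->|[r1 [-> r10]]] [->|[r2 [-> r20]]].
      - by left.
      - by right; exists r2; rewrite minC real_miney // le_comparable.
      - by right; exists r1; rewrite real_miney // le_comparable.
      - by right; exists (Num.min r1 r2); rewrite -EFin_min; split => //; rewrite lt_min r10.
    case=> [->|[r [-> r0]]].
      by exists (sigma ord0); rewrite real_miney // le_comparable.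
    by exists (Num.min (sigma ord0) r); rewrite -EFin_min; split => //; rewrite lt_min sig0.
  have es : s = r by rewrite /s /min_sigma er.
  split; first by rewrite es.
  move=> i; rewrite es -lee_fin -er; exact: bigmin_le.
pose g i y := F i y - F i x.
pose phi y := \big[Num.max/g ord0 y]_(i < k.+1) g i y.
have phi_ge i y : g i y <= phi y by exact: le_bigmax.
have phi_le y c : (forall i, g i y <= c) -> phi y <= c.
  by move=> H; apply: bigmax_le => // i _.
have phi_x : phi x <= 0 by apply: phi_le => i; rewrite /g subrr.
have phi_conv y w a : S y -> S w -> 0 <= a -> a <= 1 ->
    phi (a *: y + (1 - a) *: w) <=
    a * phi y + (1 - a) * phi w - a * (1 - a) * s / 2 * sqnorm (y - w).
  move=> Sy Sw a0 a1; apply: phi_le => i.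
  have := sigc i y w a Sy Sw a0 a1.
  have h1 := ler_wpM2l a0 (phi_ge i y).
  have a1' : 0 <= 1 - a by rewrite subr_ge0.
  have h2 := ler_wpM2l a1' (phi_ge i w).
  have c0 : 0 <= a * (1 - a) / 2 * sqnorm (y - w).
    by rewrite !mulr_ge0 // ?sqnorm_ge0 // invr_ge0.
  have h3 := ler_wpM2l c0 (ssig i).
  rewrite /g in h1 h2 *.
  move=> H; lra.
have gc i : {within S, continuous (g i)}.
  move=> y; apply: cvgB; [exact: cF | exact: cvg_cst].
have phi_cont : {within S, continuous phi}.
  have := (@cont_bigmax (subspace S) R _ (index_enum 'I_k.+1) g (g ord0) (gc ord0) gc).
  by [].
pose box (r : R) := [set v : 'rV[R]_n | forall j, `[x ord0 j - r, x ord0 j + r]%classic (v ord0 j)].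
have box_cpt r : compact (box r `&` S).
  apply: compact_closedI => //.
  have := (@rV_compact R n (fun j => `[x ord0 j - r, x ord0 j + r]%classic)).
  by apply => j; exact: segment_compact.
have box_x r : 0 <= r -> (box r `&` S) x.
  move=> r0; split => // j /=; rewrite in_itv /=; apply/andP; split; lra.
have inbox r v : S v -> (forall j, `|v ord0 j - x ord0 j| <= r) -> (box r `&` S) v.
  move=> Sv H; split => // j /=; rewrite in_itv /=.
  by have := H j; rewrite ler_norml => /andP[h1 h2]; apply/andP; split; lra.
have [c1 c1A c1min] := compact_EVT_min (ex_intro _ x (box_x 1 ler01)) (box_cpt 1)
  (continuous_subspaceW (@subIsetr _ _ _) phi_cont).
set M := `|phi c1|.
set D := 1 + 2 * M / s.
have D1 : 1 <= D.
  by rewrite /D lerDl; apply: divr_ge0; [apply: mulr_ge0 => //; exact: normr_ge0 | exact: ltW].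
have bound y : S y -> phi y <= 0 -> forall j, `|y ord0 j - x ord0 j| <= D.
  move=> Sy py0.
  set t := Num.sqrt (sqnorm (y - x)).
  have ent j : `|y ord0 j - x ord0 j| <= t.
    rewrite -sqrtr_sqr ler_sqrt ?sqnorm_ge0 //.
    by have := @sqnorm_entry R n (y - x) j; rewrite !mxE.
  move=> j; have [t1|t1] := leP t 1; first by apply: le_trans (ent j) (le_trans t1 D1).
  apply: le_trans (ent j) _.
  have t0 : 0 < t by lra.
  set a := t^-1.
  have a0 : 0 <= a by rewrite invr_ge0 ltW.
  have a1 : a <= 1 by rewrite invf_le1 // ltW.
  have at1 : a * t = 1 by rewrite mulVf // gt_eqF.
  set z := a *: y + (1 - a) *: x.
  have Sz : S z by exact: convS.
  have zbox : (box 1 `&` S) z.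
    apply: inbox => // i; rewrite /z !mxE.
    have -> : a * y ord0 i + (1 - a) * x ord0 i - x ord0 i = a * (y ord0 i - x ord0 i) by ring.
    rewrite normrM ger0_norm // -at1; exact: ler_wpM2l (ent i).
  have h1 := c1min z (mem_set zbox).
  have h2 := phi_conv y x a Sy Sx a0 a1.
  have sq : sqnorm (y - x) = t ^+ 2 by rewrite sqr_sqrtr // sqnorm_ge0.
  rewrite sq in h2.
  have e1 : a * (1 - a) * s / 2 * t ^+ 2 = (t - 1) * (s / 2).
    by rewrite /a; field; rewrite gt_eqF.
  rewrite e1 -/z in h2.
  have h3 : a * phi y <= 0 by rewrite mulr_ge0_le0.
  have h4 : (1 - a) * phi x <= 0 by rewrite mulr_ge0_le0 // subr_ge0.
  have hM : - M <= phi c1 by rewrite /M lerNnormlW.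
  have e2 : M = (D - 1) * (s / 2) by rewrite /D; field; rewrite gt_eqF.
  have s20 : 0 < s / 2 by rewrite divr_gt0.
  rewrite -(ler_pM2r s20); lra.
have D0 : 0 <= D by lra.
have [xs xsA xsmin] := compact_EVT_min (ex_intro _ x (box_x D D0)) (box_cpt D)
  (continuous_subspaceW (@subIsetr _ _ _) phi_cont).
have [_ Sxs] : (box D `&` S) xs by rewrite inE in xsA.
have glob y : S y -> phi xs <= phi y.
  move=> Sy; have [py|py] := leP (phi y) 0.
    by apply: xsmin; rewrite inE; apply: inbox => //; exact: bound.
  have := xsmin x (mem_set (box_x D D0)); lra.
have QG y : S y -> phi xs + s / 2 * sqnorm (y - xs) <= phi y.
  move=> Sy.
  set c := s / 2 * sqnorm (y - xs).
  have c0 : 0 <= c by rewrite mulr_ge0 ?sqnorm_ge0 // divr_ge0 // ltW.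
  set dd := phi xs - phi y + c.
  have H a : 0 < a -> a <= 1 -> dd <= a * c.
    move=> a0 a1.
    have h1 := glob _ (@convS R n S cvS _ _ _ Sy Sxs (ltW a0) a1).
    have h2 := phi_conv y xs a Sy Sxs (ltW a0) a1.
    have e : a * (1 - a) * s / 2 * sqnorm (y - xs) = a * (1 - a) * c by rewrite /c; ring.
    rewrite e in h2.
    have h3 : a * dd <= a * (a * c) by rewrite /dd; lra.
    by rewrite ler_pM2l in h3.
  suff : dd <= 0 by rewrite /dd; lra.
  rewrite leNgt; apply/negP => dd0.
  have hc := H 1 ltr01 (lexx _).
  have cpos : 0 < c by lra.
  have a0 : 0 < dd / (2 * c) by rewrite divr_gt0 // mulr_gt0.
  have a1 : dd / (2 * c) <= 1.
    rewrite ler_pdivrMr; [lra | by rewrite mulr_gt0].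
  have := H _ a0 a1.
  have -> : dd / (2 * c) * c = dd / 2 by field; rewrite gt_eqF.
  lra.
have par : pareto_optimal S F xs.
  split => //; case=> y [Sy [Hle [j Hj]]].
  have py : phi y <= phi xs.
    apply: phi_le => i; apply: le_trans (phi_ge i xs); rewrite /g; have := Hle i; lra.
  have := QG y Sy.
  have hsq : 0 <= sqnorm (y - xs) := @sqnorm_ge0 R n _.
  move=> h.
  have sq0 : sqnorm (y - xs) = 0.
    apply/eqP; rewrite eq_le hsq andbT.
    have : s / 2 * sqnorm (y - xs) <= 0 by lra.
    by rewrite pmulr_rle0 // divr_gt0.
  have /eqP := @sqnorm_eq0 R n _ sq0; rewrite subr_eq0 => /eqP eyx.
  by move: Hj; rewrite eyx eqxx.
have key : ((s / 2 * sqnorm (x - xs))%:E <=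
    \big[mine/+oo%E]_(i < k.+1) (F i x - F i xs)%:E)%E.
  apply: le_bigmin => [|i _]; first exact: leey.
  rewrite lee_fin; have := QG x Sx; have := phi_ge i xs; rewrite /g; lra.
apply: (@le_trans _ _ (s / 2 * sqnorm (x - xs))%:E).
  rewrite (EFinM (s / 2) (sqnorm (x - xs))).
  have s2 : (0 <= (s / 2)%:E)%E by rewrite lee_fin divr_ge0 // ltW.
  apply: (lee_wpmul2l s2).
  by apply: ereal_inf_lbound; exists xs.
apply: le_trans key _.
by apply: ereal_sup_ubound; exists xs.
Qed.
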